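(* Let $G_{\lambda,k}$ be a skeleton of a connected graph $G$, and let $G''=G_{(\lambda,k)_{(2,2)}}$ be the $(2,2)$-skeleton of $G_{\lambda,k}$. If two vertices of $G''$ are $2$-disjoint in $G''$, then the sets of vertices of $G_{\lambda,k}$ they come from (their preimages under the natural map $G_{\lambda,k}\to G''$) are $3$-disjoint in $G_{\lambda,k}$.
   Context: $d$ is the graph metric of the relevant graph. Sets $X,Y$ are $r$-disjoint if $d(a,b)>r$ for all $a\in X,b\in Y$. A set $X$ is $k$-connected if any two of its points are joined by a finite sequence in $X$ with consecutive distances $\le k$. Skeleton $\Gamma_{\lambda,k}$ of a connected graph $\Gamma$ (root $x_0$, scale $\lambda\ge1$, connectivity $k\ge1$): layers $A_{N,\lambda}=\{x: N\lambda<d(x,x_0)\le(N+1)\lambda\}$, $N\in\mathbb Z$; blocks are the maximal $k$-connected subsets of layers (distances in $\Gamma$); $\Gamma_{\lambda,k}$ has a vertex per block and an edge between two blocks iff an edge of $\Gamma$ joins them; the natural map sends each vertex to its block. $G_{(\lambda,k)_{(2,2)}}$ is the skeleton of the graph $G_{\lambda,k}$ (with its own metric) with scale $2$ and connectivity $2$, rooted at the block containing the root of $G$. *)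

(* Defs.v *)
(* graphs are arbitrary (possibly infinite) types with an
   adjacency relation; distances are handled relationally via walks. *)
From Stdlib Require Import Reals ZArith.
Open Scope R_scope.

Record graph : Type := Graph { vtx : Type; adj : vtx -> vtx -> Prop }.

Inductive reach (G : graph) : nat -> vtx G -> vtx G -> Prop :=
| reach0 x : reach G 0 x x
| reachS n x y z : adj G x y -> reach G n y z -> reach G (S n) x z.

Definition dist_eq (G : graph) (x y : vtx G) (n : nat) : Prop :=
  reach G n x y /\ forall m, (m < n)%nat -> ~ reach G m x y.

Definition dist_le (G : graph) (x y : vtx G) (r : R) : Prop :=
  exists n, reach G n x y /\ INR n <= r.

Definition connected (G : graph) : Prop :=
  forall x y : vtx G, exists n, reach G n x y.

Definition simple_graph (G : graph) : Prop :=
  (forall x y, adj G x y -> adj G y x) /\ (forall x, ~ adj G x x).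

Definition r_disjoint (G : graph) (r : R) (X Y : vtx G -> Prop) : Prop :=
  forall a b, X a -> Y b -> ~ dist_le G a b r.

Inductive kchain (G : graph) (k : R) (X : vtx G -> Prop) : vtx G -> vtx G -> Prop :=
| kchain0 x : X x -> kchain G k X x x
| kchainS x y z : X x -> dist_le G x y k -> kchain G k X y z -> kchain G k X x z.

Definition k_connected (G : graph) (k : R) (X : vtx G -> Prop) : Prop :=
  forall a b, X a -> X b -> kchain G k X a b.

Definition layer (G : graph) (x0 : vtx G) (lam : R) (N : Z) (x : vtx G) : Prop :=
  exists n, dist_eq G x x0 n /\ IZR N * lam < INR n <= (IZR N + 1) * lam.

Definition is_block (G : graph) (x0 : vtx G) (lam k : R) (B : vtx G -> Prop) : Prop :=
  exists N : Z,
    (forall x, B x -> layer G x0 lam N x) /\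
    (exists x, B x) /\
    k_connected G k B /\
    (forall C : vtx G -> Prop,
        (forall x, C x -> layer G x0 lam N x) -> k_connected G k C ->
        (forall x, B x -> C x) -> forall x, C x -> B x).

Definition skeleton (G : graph) (x0 : vtx G) (lam k : R) : graph :=
  {| vtx := { B : vtx G -> Prop | is_block G x0 lam k B };
     adj := fun B1 B2 =>
       B1 <> B2 /\ exists x y, proj1_sig B1 x /\ proj1_sig B2 y /\ adj G x y |}.

(* Main.v *)
Require Import Defs.
From Stdlib Require Import Reals ZArith.
From Stdlib Require Import Lia Lra Classical FunctionalExtensionality PropExtensionality ProofIrrelevance.
Open Scope R_scope.

Lemma reach_app (T : graph) n m x y z : reach T n x y -> reach T m y z -> reach T (n+m) x z.
Proof. induction 1; intros; simpl; auto. econstructor; eauto. Qed.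

Lemma reach_snoc T n x y z : reach T n x y -> adj T y z -> reach T (S n) x z.
Proof. intros. replace (S n) with (n+1)%nat by lia. apply reach_app with y; auto.
  econstructor; eauto. constructor. Qed.

Lemma reach_sym T (Hs : forall x y, adj T x y -> adj T y x) n x y :
  reach T n x y -> reach T n y x.
Proof. induction 1. constructor. apply reach_snoc with y; auto. Qed.

Lemma dist_le_sym T (Hs : forall x y, adj T x y -> adj T y x) x y k :
  dist_le T x y k -> dist_le T y x k.
Proof. intros [n [Hn Hl]]. exists n; split; auto. apply reach_sym; auto. Qed.

Lemma min_exists (P : nat -> Prop) :
  (exists n, P n) -> exists n, P n /\ forall m, (m < n)%nat -> ~ P m.
Proof.
  intros [n Hn]. revert Hn. induction n as [n IH] using (well_founded_induction lt_wf).
  intros Hn. destruct (classic (exists m, (m < n)%nat /\ P m)) as [[m [Hm Pm]]|Hno].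
  - exact (IH m Hm Pm).
  - exists n; split; auto. intros m Hm Pm. apply Hno; eauto.
Qed.

Lemma dist_exists T x r : (exists n, reach T n x r) -> exists n, dist_eq T x r n.
Proof. intros E. destruct (min_exists _ E) as [n [? ?]]. exists n; split; auto. Qed.

Lemma dist_unique T x r n m : dist_eq T x r n -> dist_eq T x r m -> n = m.
Proof. intros [Hn Mn] [Hm Mm]. destruct (Nat.lt_total n m) as [h|[h|h]]; auto.
  exfalso; exact (Mm n h Hn). exfalso; exact (Mn m h Hm). Qed.

Lemma dist_adj T x y r n m : adj T x y -> dist_eq T x r n -> dist_eq T y r m -> (n <= S m)%nat.
Proof. intros A [Hn Mn] [Hm Mm]. destruct (Nat.le_gt_cases n (S m)) as [h|h]; auto.
  exfalso. apply (Mn (S m) h). econstructor; eauto. Qed.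

Definition li (n : nat) : Z := (Z.of_nat ((n+1)/2) - 1)%Z.

Lemma layer_li T r x n : dist_eq T x r n -> layer T r 2 (li n) x.
Proof.
  intros D. exists n; split; auto. unfold li.
  pose proof (Nat.div_mod (n+1) 2 ltac:(lia)) as hd.
  pose proof (Nat.mod_upper_bound (n+1) 2 ltac:(lia)) as hm.
  set (g := ((n+1)/2)%nat) in *.
  assert (h1 : (n <= 2*g)%nat) by lia.
  assert (h2 : (2*g < n+2)%nat) by lia.
  apply le_INR in h1. apply lt_INR in h2. rewrite mult_INR in h1, h2.
  rewrite plus_INR in h2. simpl in h1, h2.
  rewrite minus_IZR, <- INR_IZR_INZ. lra.
Qed.

Lemma layer_unique T r x N M : layer T r 2 N x -> layer T r 2 M x -> N = M.
Proof.
  intros [n [Dn [a b]]] [m [Dm [c d]]].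
  pose proof (dist_unique _ _ _ _ _ Dn Dm); subst m.
  assert (h1 : IZR N < IZR (M+1)) by (rewrite plus_IZR; lra).
  assert (h2 : IZR M < IZR (N+1)) by (rewrite plus_IZR; lra).
  apply lt_IZR in h1. apply lt_IZR in h2. lia.
Qed.

Lemma kchain_in T k X x y : kchain T k X x y -> X x /\ X y.
Proof. induction 1; intuition. Qed.

Lemma kchain_mono T k (X Y : vtx T -> Prop) x y :
  (forall z, X z -> Y z) -> kchain T k X x y -> kchain T k Y x y.
Proof. intros Sb; induction 1. apply kchain0; auto. apply kchainS with y; auto. Qed.

Lemma kchain_snoc T k X a b c :
  kchain T k X a b -> dist_le T b c k -> X c -> kchain T k X a c.
Proof. induction 1; intros.
  apply kchainS with c; auto. apply kchain0; auto.
  apply kchainS with y; auto. Qed.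

Lemma kchain_app T k X a b c : kchain T k X a b -> kchain T k X b c -> kchain T k X a c.
Proof. induction 1; intros; auto. apply kchainS with y; auto. Qed.

Lemma kchain_sym T (Hs : forall x y, adj T x y -> adj T y x) k X a b :
  kchain T k X a b -> kchain T k X b a.
Proof. induction 1. apply kchain0; auto. apply kchain_snoc with y; auto.
  apply dist_le_sym; auto. Qed.

Lemma block_exists T (Hs : forall x y, adj T x y -> adj T y x) r N s :
  layer T r 2 N s -> exists B : vtx (skeleton T r 2 2), proj1_sig B s.
Proof.
  intros Ls.
  pose (L := layer T r 2 N).
  pose (C := fun y => kchain T 2 L s y).
  assert (HB : is_block T r 2 2 C).
  { exists N. split; [|split; [|split]].
    - intros x Cx. exact (proj2 (kchain_in _ _ _ _ _ Cx)).
    - exists s. apply kchain0. exact Ls.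
    - intros p q Cp Cq.
      assert (Kpq : kchain T 2 L p q).
      { apply kchain_app with s; [apply kchain_sym; auto | auto]. }
      clear Cq. revert Cp. induction Kpq; intros Cp.
      + apply kchain0; auto.
      + apply kchainS with y; auto. apply IHKpq. unfold C.
        apply kchain_snoc with x; auto. exact (proj1 (kchain_in _ _ _ _ _ Kpq)).
    - intros C' HC' KC' Sub x C'x. unfold C. apply kchain_mono with C'; auto.
      apply KC'; auto. apply Sub. apply kchain0; exact Ls. }
  exists (exist _ C HB). simpl. apply kchain0. exact Ls.
Qed.

Lemma block_eq T (Hs : forall x y, adj T x y -> adj T y x) r
  (B1 B2 : vtx (skeleton T r 2 2)) x y N :
  proj1_sig B1 x -> proj1_sig B2 y -> dist_le T x y 2 ->
  layer T r 2 N x -> layer T r 2 N y -> B1 = B2.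
Proof.
  destruct B1 as [P1 HP1], B2 as [P2 HP2]; simpl. intros P1x P2y Dxy Lx Ly.
  pose proof HP1 as [N1 [L1 [_ [K1 M1]]]].
  pose proof HP2 as [N2 [L2 [_ [K2 M2]]]].
  pose proof (layer_unique _ _ _ _ _ (L1 x P1x) Lx). subst N1.
  pose proof (layer_unique _ _ _ _ _ (L2 y P2y) Ly). subst N2.
  pose (C := fun z => P1 z \/ P2 z).
  assert (HC : forall z, C z -> layer T r 2 N z) by (intros z [h|h]; auto).
  assert (m1 : forall z, P1 z -> C z) by (intros z h; left; auto).
  assert (m2 : forall z, P2 z -> C z) by (intros z h; right; auto).
  assert (KC : k_connected T 2 C).
  { intros p q [Pp|Pp] [Pq|Pq].
    - apply kchain_mono with P1; auto.
    - apply kchain_app with x. apply kchain_mono with P1; auto.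
      apply kchainS with y; auto. apply kchain_mono with P2; auto.
    - apply kchain_app with y. apply kchain_mono with P2; auto.
      apply kchainS with x; auto. apply dist_le_sym; auto. apply kchain_mono with P1; auto.
    - apply kchain_mono with P2; auto. }
  assert (E : P1 = P2).
  { apply functional_extensionality; intro z. apply propositional_extensionality; split.
    - intro h. apply (M2 C HC KC m2 z (m1 z h)).
    - intro h. apply (M1 C HC KC m1 z (m2 z h)). }
  subst P2. f_equal. apply proof_irrelevance.
Qed.

Lemma step_K T r (B1 B2 : vtx (skeleton T r 2 2)) x y :
  proj1_sig B1 x -> proj1_sig B2 y -> adj T x y ->
  B1 = B2 \/ adj (skeleton T r 2 2) B1 B2.
Proof. intros. destruct (classic (B1 = B2)); [left; auto| right; split; auto; exists x, y; auto]. Qed.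

Definition reach_le T p a b := exists m, (m <= p)%nat /\ reach T m a b.

Lemma rl_refl T p a : reach_le T p a a.
Proof. exists 0%nat; split; [lia| constructor]. Qed.

Lemma rl_step T p a b c : (a = b \/ adj T a b) -> reach_le T p b c -> reach_le T (S p) a c.
Proof. intros [->|A] [m [Hm R]]. exists m; split; auto. exists (S m); split; [lia| econstructor; eauto]. Qed.

Lemma rl_mono T p q a b : (p <= q)%nat -> reach_le T p a b -> reach_le T q a b.
Proof. intros h [m [Hm R]]. exists m; split; auto; lia. Qed.

Lemma li_comb d0 d1 d2 d3 :
  (d0 <= S d1)%nat -> (d1 <= S d0)%nat -> (d1 <= S d2)%nat -> (d2 <= S d1)%nat ->
  (d2 <= S d3)%nat -> (d3 <= S d2)%nat ->
  li d0 = li d1 \/ li d1 = li d2 \/ li d2 = li d3 \/ li d0 = li d2 \/ li d1 = li d3.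
Proof. unfold li. intros.
  pose proof (Nat.div_mod (d0+1) 2 ltac:(lia)). pose proof (Nat.mod_upper_bound (d0+1) 2 ltac:(lia)).
  pose proof (Nat.div_mod (d1+1) 2 ltac:(lia)). pose proof (Nat.mod_upper_bound (d1+1) 2 ltac:(lia)).
  pose proof (Nat.div_mod (d2+1) 2 ltac:(lia)). pose proof (Nat.mod_upper_bound (d2+1) 2 ltac:(lia)).
  pose proof (Nat.div_mod (d3+1) 2 ltac:(lia)). pose proof (Nat.mod_upper_bound (d3+1) 2 ltac:(lia)).
  lia. Qed.

Lemma dl2 T x y : reach T 2 x y -> dist_le T x y 2.
Proof. intros h. exists 2%nat; split; auto. simpl; lra. Qed.

Lemma dl1 T x y : adj T x y -> dist_le T x y 2.
Proof. intros h. exists 1%nat; split. econstructor; eauto. constructor. simpl; lra. Qed.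

Lemma dl2' T x y z : adj T x y -> adj T y z -> dist_le T x z 2.
Proof. intros h1 h2. apply dl2. econstructor. exact h1. econstructor. exact h2. constructor. Qed.

Lemma main_gen T (Hs : forall x y, adj T x y -> adj T y x) r
  (u w : vtx (skeleton T r 2 2)) a b n :
  proj1_sig u a -> proj1_sig w b -> reach T n a b -> (n <= 3)%nat ->
  reach_le (skeleton T r 2 2) 2 u w.
Proof.
  intros Ua Wb R Hn.
  pose proof (proj2_sig u) as [N [LN _]].
  destruct (LN a Ua) as [d0 [D0 _]].
  inversion R as [|n1 a' s1 b1 A1 R1]; subst.
  - replace w with u. apply rl_refl.
    apply (block_eq T Hs r u w b b N); auto. exists 0%nat; split; [constructor|simpl; lra].
  - assert (E1 : exists d1, dist_eq T s1 r d1).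
    { apply dist_exists. exists (S d0). econstructor. apply Hs; eauto. apply D0. }
    destruct E1 as [d1 D1].
    destruct (block_exists T Hs r _ s1 (layer_li _ _ _ _ D1)) as [v1 V1].
    inversion R1 as [|n2 a2 s2 b2 A2 R2]; subst.
    + apply rl_mono with 1%nat; [lia|]. apply rl_step with w. eapply step_K; eauto. apply rl_refl.
    + assert (E2 : exists d2, dist_eq T s2 r d2).
      { apply dist_exists. exists (S d1). econstructor. apply Hs; eauto. apply D1. }
      destruct E2 as [d2 D2].
      destruct (block_exists T Hs r _ s2 (layer_li _ _ _ _ D2)) as [v2 V2].
      inversion R2 as [|n3 a3 s3 b3 A3 R3]; subst.
      * apply rl_step with v1. eapply step_K; eauto.
        apply rl_step with w. eapply step_K; eauto. apply rl_refl.
      * inversion R3 as [|n4 a4 s4 b4 A4 R4]; subst; [|lia].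
        assert (E3 : exists d3, dist_eq T b r d3).
        { apply dist_exists. exists (S d2). econstructor. apply Hs; eauto. apply D2. }
        destruct E3 as [d3 D3].
        pose proof (dist_adj _ _ _ _ _ _ A1 D0 D1).
        pose proof (dist_adj _ _ _ _ _ _ (Hs _ _ A1) D1 D0).
        pose proof (dist_adj _ _ _ _ _ _ A2 D1 D2).
        pose proof (dist_adj _ _ _ _ _ _ (Hs _ _ A2) D2 D1).
        pose proof (dist_adj _ _ _ _ _ _ A3 D2 D3).
        pose proof (dist_adj _ _ _ _ _ _ (Hs _ _ A3) D3 D2).
        pose proof (layer_li _ _ _ _ D0) as L0.
        pose proof (layer_li _ _ _ _ D1) as L1.
        pose proof (layer_li _ _ _ _ D2) as L2.
        pose proof (layer_li _ _ _ _ D3) as L3.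
        destruct (li_comb d0 d1 d2 d3) as [e|[e|[e|[e|e]]]]; auto.
        -- replace v1 with u in *.
           2:{ apply (block_eq T Hs r u v1 a s1 (li d0)); auto.
               apply dl1; auto.
               all: first [rewrite e; assumption | rewrite <- e; assumption]. }
           apply rl_step with v2. eapply step_K; eauto.
           apply rl_step with w. eapply step_K; eauto. apply rl_refl.
        -- replace v2 with v1 in *.
           2:{ apply (block_eq T Hs r v1 v2 s1 s2 (li d1)); auto.
               apply dl1; auto.
               all: first [rewrite e; assumption | rewrite <- e; assumption]. }
           apply rl_step with v1. apply (step_K _ _ _ _ a s1); auto.
           apply rl_step with w. apply (step_K _ _ _ _ s2 b); auto. apply rl_refl.
        -- replace w with v2 in *.
           2:{ apply (block_eq T Hs r v2 w s2 b (li d2)); auto.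
               apply dl1; auto.
               all: first [rewrite e; assumption | rewrite <- e; assumption]. }
           apply rl_step with v1. eapply step_K; eauto.
           apply rl_step with v2. eapply step_K; eauto. apply rl_refl.
        -- replace v2 with u in *.
           2:{ apply (block_eq T Hs r u v2 a s2 (li d0)); auto.
               eapply dl2'; eauto.
               all: first [rewrite e; assumption | rewrite <- e; assumption]. }
           apply rl_mono with 1%nat; [lia|].
           apply rl_step with w. eapply step_K; eauto. apply rl_refl.
        -- replace w with v1 in *.
           2:{ apply (block_eq T Hs r v1 w s1 b (li d1)); auto.
               eapply dl2'; eauto.
               all: first [rewrite e; assumption | rewrite <- e; assumption]. }
           apply rl_mono with 1%nat; [lia|].
           apply rl_step with v1. eapply step_K; eauto. apply rl_refl.
Qed.

(* r1 is the block of G_{lam,k} containing the root x0 (the root of G'');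
   u, w are vertices of G'' = (G_{lam,k})_{(2,2)}; the preimage of a vertex
   U of G'' under the natural map G_{lam,k} -> G'' is the block U itself. *)
Theorem lemma5 (G : graph) (x0 : vtx G) (lam k : R)
  (HG : simple_graph G) (Hconn : connected G)
  (Hlam : 1 <= lam) (Hk : 1 <= k)
  (r1 : vtx (skeleton G x0 lam k)) (Hr1 : proj1_sig r1 x0)
  (u w : vtx (skeleton (skeleton G x0 lam k) r1 2 2)) :
  r_disjoint (skeleton (skeleton G x0 lam k) r1 2 2) 2
    (fun z => z = u) (fun z => z = w) ->
  r_disjoint (skeleton G x0 lam k) 3 (proj1_sig u) (proj1_sig w).
Proof.
  intros Hdis a b Ua Wb [n [Rn Hn]].
  destruct HG as [Gs _].
  assert (Hs : forall x y, adj (skeleton G x0 lam k) x y -> adj (skeleton G x0 lam k) y x).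
  { intros x y [ne [p [q [h1 [h2 h3]]]]]. split; [auto|]. exists q, p; auto. }
  assert (n3 : (n <= 3)%nat).
  { destruct (le_lt_dec n 3) as [l|l]; auto. apply lt_INR in l. simpl in l. lra. }
  destruct (main_gen _ Hs r1 u w a b n Ua Wb Rn n3) as [m [Hm Rm]].
  apply (Hdis u w eq_refl eq_refl). exists m; split; auto.
  apply le_INR in Hm. simpl in Hm. lra.
Qed.
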